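(* Let $M$ be a smooth manifold of dimension $n$, let $\phi$ be a $1$-form on $M$ (not necessarily closed), let $t\in\mathbb{R}$, and let $F$ be a real-valued symmetric function ($F(a,b)=F(b,a)$) on $\{(a,b)\in\mathbb{Z}^2 \mid a+b\le n-1\}$. On $\mathfrak{h}=\bigoplus_{q=0}^{n}\Lambda^q T^*M$ define, for $\alpha\in\Lambda^aT^*M$ and $\beta\in\Lambda^bT^*M$, and extended bilinearly, $$[\alpha,\beta]_{t,\phi}=F(a,b)\,\alpha\wedge(t\phi)\wedge\beta .$$ Then $(\mathfrak{h},[\cdot,\cdot]_{t,\phi})$ is a Lie superalgebra.
   Context: $\Lambda^qT^*M$ denotes the space of smooth differential $q$-forms on $M$. In $\mathfrak{h}$ a $q$-form has degree $q'=-q-1$. A bracket on a $\mathbb{Z}$-graded space is a super bracket (making it a Lie superalgebra) if for homogeneous elements $P,Q,R$ of degrees $p',q',r'$: (super symmetry) $[P,Q]=-(-1)^{p'q'}[Q,P]$, and (super Jacobi identity) $[P,[Q,R]]=[[P,Q],R]+(-1)^{p'q'}[Q,[P,R]]$. *)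

(* Defs.v *)
From HB Require Import structures.
From mathcomp Require Import all_boot all_order all_algebra.
From mathcomp Require Export reals.
Set Implicit Arguments. Unset Strict Implicit. Unset Printing Implicit Defensive.
Import Order.TTheory GRing.Theory Num.Theory.
Local Open Scope ring_scope.

(* The algebra of differential forms  Omega(M) = (+)_{q=0}^n Lambda^q T^*M  of an
   n-dimensional manifold, modelled abstractly: an associative unital R-algebra A
   (multiplication = wedge product) together with the projections  pi q : A -> A
   onto the homogeneous components of form-degree q, satisfying the structural
   properties of the wedge product (grading, graded commutativity, top degree n). *)
Definition form_algebra (R : realType) (n : nat) (A : algType R)
    (pi : nat -> A -> A) : Prop :=
  [/\ (forall q (a : R) (x y : A), pi q (a *: x + y) = a *: pi q x + pi q y),
      (forall p q (x : A), pi p (pi q x) = if p == q then pi q x else 0),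
      (forall x : A, x = \sum_(q < n.+1) pi q x),
      (forall p q (x y : A), pi (p + q)%N (pi p x * pi q y) = pi p x * pi q y) &
      (forall p q (x y : A),
          pi p x * pi q y = (-1) ^+ (p * q) *: (pi q y * pi p x))].

(* The Z-grading of h: a q-form (0 <= q <= n) has degree q' = -q-1.
   hdeg d x  means  x is homogeneous of degree d in h. *)
Definition hdeg (R : realType) (n : nat) (A : algType R) (pi : nat -> A -> A)
    (d : int) (x : A) : Prop :=
  if (d <= -1) && (- d - 1 <= n%:Z) then pi `|- d - 1|%N x = x else x = 0.

Definition br_tphi (R : realType) (n : nat) (A : algType R) (pi : nat -> A -> A)
    (F : int -> int -> R) (t : R) (phi : A) (x y : A) : A :=
  \sum_(a < n.+1) \sum_(b < n.+1)
     F (a : nat)%:Z (b : nat)%:Z *: (pi a x * (t *: phi) * pi b y).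

Definition lie_superalgebra (R : realType) (V : lmodType R)
    (hom : int -> V -> Prop) (br : V -> V -> V) : Prop :=
  [/\ (forall (a : R) (x y z : V), br (a *: x + y) z = a *: br x z + br y z),
      (forall (a : R) (x y z : V), br z (a *: x + y) = a *: br z x + br z y),
      (forall p q (P Q : V), hom p P -> hom q Q -> hom (p + q) (br P Q)),
      (forall p q (P Q : V), hom p P -> hom q Q ->
          br P Q = - ((-1) ^+ `|(p * q)%R|%N *: br Q P)) &
      (forall p q r (P Q R' : V), hom p P -> hom q Q -> hom r R' ->
          br P (br Q R') = br (br P Q) R' + (-1) ^+ `|(p * q)%R|%N *: br Q (br P R'))].

(* Main.v *)
Require Import Defs.
From HB Require Import structures.
From mathcomp Require Import all_boot all_order all_algebra reals.
From mathcomp Require Import zify ring.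
Import Order.TTheory GRing.Theory Num.Theory.
Local Open Scope ring_scope.
Set Implicit Arguments.

Lemma piD (R : realType) (n : nat) (A : algType R) (pi : nat -> A -> A)
  (HA : form_algebra n pi) q (x y : A) : pi q (x + y) = pi q x + pi q y.
Proof. case: HA => h _ _ _ _. by have := h q 1 x y; rewrite !scale1r. Qed.

Lemma pi0 (R : realType) (n : nat) (A : algType R) (pi : nat -> A -> A)
  (HA : form_algebra n pi) q : pi q 0 = 0.
Proof.
have := piD HA q 0 0; rewrite addr0 => /eqP.
by rewrite -subr_eq0 opprD addrA subrr sub0r oppr_eq0 => /eqP.
Qed.

Lemma piZ (R : realType) (n : nat) (A : algType R) (pi : nat -> A -> A)
  (HA : form_algebra n pi) q a (x : A) : pi q (a *: x) = a *: pi q x.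
Proof. have := pi0 HA q; case: HA => h _ _ _ _ z. by have := h q a x 0; rewrite !addr0 z addr0. Qed.

Lemma pi_sum (R : realType) (n : nat) (A : algType R) (pi : nat -> A -> A)
  (HA : form_algebra n pi) q m (f : 'I_m -> A) :
  pi q (\sum_(i < m) f i) = \sum_(i < m) pi q (f i).
Proof. exact: (big_morph (pi q) (piD HA q) (pi0 HA q)). Qed.

Lemma pipi (R : realType) (n : nat) (A : algType R) (pi : nat -> A -> A)
  (HA : form_algebra n pi) p q (x : A) :
  pi p (pi q x) = if p == q then pi q x else 0.
Proof. by case: HA. Qed.

Lemma vanish (R : realType) (n : nat) (A : algType R) (pi : nat -> A -> A)
  (HA : form_algebra n pi) m (y : A) : pi m y = y -> (n < m)%N -> y = 0.
Proof.
move=> Hy Hm; case: (HA) => _ _ hs _ _.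
rewrite (hs y); apply: big1 => q _; rewrite -Hy (pipi HA).
case: eqP => // E; have := ltn_ord q; rewrite E; lia.
Qed.

Lemma phiphi (R : realType) (n : nat) (A : algType R) (pi : nat -> A -> A)
  (HA : form_algebra n pi) (phi : A) : pi 1%N phi = phi -> phi * phi = 0.
Proof.
move=> Hphi; case: (HA) => _ _ _ _ hc.
have E : phi * phi = - (phi * phi).
  by have := hc 1%N 1%N phi phi; rewrite Hphi muln1 expr1 scaleN1r.
have : (2%:R : R) *: (phi * phi) = 0 by rewrite scaler_nat mulr2n {1}E addNr.
by move/eqP; rewrite scaler_eq0 pnatr_eq0 /= => /eqP.
Qed.

Lemma homprod (R : realType) (n : nat) (A : algType R) (pi : nat -> A -> A)
  (HA : form_algebra n pi) (phi : A) : pi 1%N phi = phi -> forall a b (y z : A),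
  pi (a + 1 + b)%N (pi a y * phi * pi b z) = pi a y * phi * pi b z.
Proof.
move=> Hphi a b y z; case: (HA) => _ _ _ hp _.
rewrite -{1 2}Hphi -(hp a 1%N) hp //.
Qed.

Lemma phi_l (R : realType) (n : nat) (A : algType R) (pi : nat -> A -> A)
  (HA : form_algebra n pi) (phi : A) : pi 1%N phi = phi -> forall a (y z : A),
  phi * (pi a y * phi * z) = 0.
Proof.
move=> Hphi a y z; case: (HA) => _ _ _ _ hc.
rewrite !mulrA -{1}Hphi hc Hphi -!scalerAl -[pi a y * phi * phi]mulrA (phiphi HA Hphi).
by rewrite mulr0 mul0r scaler0.
Qed.

Lemma phi_r (R : realType) (n : nat) (A : algType R) (pi : nat -> A -> A)
  (HA : form_algebra n pi) (phi : A) : pi 1%N phi = phi -> forall b (x y : A),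
  (x * phi * pi b y) * phi = 0.
Proof.
move=> Hphi b x y; case: (HA) => _ _ _ _ hc.
rewrite -!mulrA -{2}Hphi hc Hphi -!scalerAr [phi * (phi * _)]mulrA (phiphi HA Hphi).
by rewrite mul0r mulr0 scaler0.
Qed.

Lemma br_term (R : realType) (A : algType R) (x y phi : A) (t : R) :
  x * (t *: phi) * y = t *: (x * phi * y).
Proof. by rewrite -scalerAr -scalerAl. Qed.

Lemma L1 (R : realType) (n : nat) (A : algType R) (pi : nat -> A -> A)
  (HA : form_algebra n pi) (phi : A) (Hphi : pi 1%N phi = phi) F t d (Y Z : A) :
  phi * pi d (br_tphi n pi F t phi Y Z) = 0.
Proof.
rewrite /br_tphi (pi_sum HA) mulr_sumr; apply: big1 => a _.
rewrite (pi_sum HA) mulr_sumr; apply: big1 => b _.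
rewrite br_term !(piZ HA) -(homprod HA Hphi) (pipi HA).
case: eqP => _; last by rewrite !scaler0 mulr0.
by rewrite (homprod HA Hphi) -!scalerAr (phi_l HA Hphi) !scaler0.
Qed.

Lemma L2 (R : realType) (n : nat) (A : algType R) (pi : nat -> A -> A)
  (HA : form_algebra n pi) (phi : A) (Hphi : pi 1%N phi = phi) F t d (Y Z : A) :
  pi d (br_tphi n pi F t phi Y Z) * phi = 0.
Proof.
rewrite /br_tphi (pi_sum HA) mulr_suml; apply: big1 => a _.
rewrite (pi_sum HA) mulr_suml; apply: big1 => b _.
rewrite br_term !(piZ HA) -(homprod HA Hphi) (pipi HA).
case: eqP => _; last by rewrite !scaler0 mul0r.
by rewrite (homprod HA Hphi) -!scalerAl (phi_r HA Hphi) !scaler0.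
Qed.

Lemma dbl0 (R : realType) (n : nat) (A : algType R) (pi : nat -> A -> A)
  (HA : form_algebra n pi) (phi : A) (Hphi : pi 1%N phi = phi) F t (X Y Z : A) :
  br_tphi n pi F t phi X (br_tphi n pi F t phi Y Z) = 0 /\
  br_tphi n pi F t phi (br_tphi n pi F t phi X Y) Z = 0.
Proof.
split; rewrite {1}/br_tphi; apply: big1 => a _; apply: big1 => b _;
  rewrite br_term.
  by rewrite -mulrA (L1 HA Hphi) mulr0 !scaler0.
by rewrite (L2 HA Hphi) mul0r !scaler0.
Qed.

Lemma brDl (R : realType) (n : nat) (A : algType R) (pi : nat -> A -> A)
  (HA : form_algebra n pi) F t (phi : A) (k : R) (x y z : A) :
  br_tphi n pi F t phi (k *: x + y) z =
  k *: br_tphi n pi F t phi x z + br_tphi n pi F t phi y z.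
Proof.
case: (HA) => h _ _ _ _.
rewrite /br_tphi scaler_sumr -big_split; apply: eq_bigr => a _.
rewrite scaler_sumr -big_split; apply: eq_bigr => b _.
rewrite h mulrDl mulrDl -!scalerAl scalerDr !scalerA mulrC //.
Qed.

Lemma brDr (R : realType) (n : nat) (A : algType R) (pi : nat -> A -> A)
  (HA : form_algebra n pi) F t (phi : A) (k : R) (x y z : A) :
  br_tphi n pi F t phi z (k *: x + y) =
  k *: br_tphi n pi F t phi z x + br_tphi n pi F t phi z y.
Proof.
case: (HA) => h _ _ _ _.
rewrite /br_tphi scaler_sumr -big_split; apply: eq_bigr => a _.
rewrite scaler_sumr -big_split; apply: eq_bigr => b _.
rewrite h mulrDr -!scalerAr scalerDr !scalerA mulrC //.
Qed.

Lemma br0l (R : realType) (n : nat) (A : algType R) (pi : nat -> A -> A)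
  (HA : form_algebra n pi) F t (phi : A) (z : A) :
  br_tphi n pi F t phi 0 z = 0.
Proof.
rewrite /br_tphi; apply: big1 => a _; apply: big1 => b _.
by rewrite (pi0 HA) !mul0r scaler0.
Qed.

Lemma br0r (R : realType) (n : nat) (A : algType R) (pi : nat -> A -> A)
  (HA : form_algebra n pi) F t (phi : A) (z : A) :
  br_tphi n pi F t phi z 0 = 0.
Proof.
rewrite /br_tphi; apply: big1 => a _; apply: big1 => b _.
by rewrite (pi0 HA) !mulr0 scaler0.
Qed.

Lemma br_hom (R : realType) (n : nat) (A : algType R) (pi : nat -> A -> A)
  (HA : form_algebra n pi) F t (phi : A) a b (P Q : A) :
  (a <= n)%N -> (b <= n)%N -> pi a P = P -> pi b Q = Q ->
  br_tphi n pi F t phi P Q = F a%:Z b%:Z *: (t *: (P * phi * Q)).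
Proof.
move=> Ha Hb HP HQ.
transitivity (\sum_(a' < n.+1 | a' == a :> nat)
   \sum_(b' < n.+1) F (a' : nat)%:Z (b' : nat)%:Z *: (P * (t *: phi) * pi b' Q)).
  rewrite /br_tphi [RHS]big_mkcond; apply: eq_bigr => a' _.
  rewrite -{1}HP (pipi HA); case: eqP => [_|_]; first by rewrite HP.
  by apply: big1 => b' _; rewrite !mul0r scaler0.
rewrite (big_ord1_eq _ (fun a' : nat => \sum_(b' < n.+1)
   F a'%:Z (b' : nat)%:Z *: (P * (t *: phi) * pi b' Q))) ltnS Ha.
transitivity (\sum_(b' < n.+1 | b' == b :> nat) F a%:Z (b' : nat)%:Z *: (P * (t *: phi) * Q)).
  rewrite [RHS]big_mkcond; apply: eq_bigr => b' _.
  rewrite -{1}HQ (pipi HA); case: eqP => [_|_]; first by rewrite HQ.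
  by rewrite !mulr0 scaler0.
rewrite (big_ord1_eq _ (fun b' : nat => F a%:Z b'%:Z *: (P * (t *: phi) * Q))) ltnS Hb.
by rewrite br_term.
Qed.

Lemma homP (R : realType) (n : nat) (A : algType R) (pi : nat -> A -> A)
  p (P : A) : hdeg n pi p P ->
  P = 0 \/ exists a, [/\ (a <= n)%N, p = -(a%:Z) - 1 & pi a P = P].
Proof.
rewrite /hdeg; case: ifP => [/andP[h1 h2] H | _ H]; last by left.
right; exists `|-p-1|%N; split => //; lia.
Qed.

Lemma hdeg0 (R : realType) (n : nat) (A : algType R) (pi : nat -> A -> A)
  (HA : form_algebra n pi) d : hdeg n pi d 0.
Proof. by rewrite /hdeg; case: ifP => _ //; rewrite (pi0 HA). Qed.

Lemma sign_key (R : realType) (a b : nat) :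
  (-1) ^+ `|((- a%:Z - 1) * (- b%:Z - 1))%R|%N * ((-1) ^+ b * (-1) ^+ ((1 + b) * a)%N)
  = - 1 :> R.
Proof.
have -> : `|((- a%:Z - 1) * (- b%:Z - 1))%R|%N = (a.+1 * b.+1)%N.
  have -> : ((- a%:Z - 1) * (- b%:Z - 1))%R = ((a.+1 * b.+1)%N)%:Z.
    by rewrite PoszM; ring.
  by rewrite absz_nat.
rewrite -!exprD -signr_odd.
have -> : (a.+1 * b.+1 + (b + (1 + b) * a) = (a*b+a+b).*2.+1)%N.
  by rewrite -mul2n; ring.
by rewrite /= odd_double /= expr1.
Qed.

Unset Implicit Arguments.

Theorem mainTheorem1 (R : realType) (n : nat) (A : algType R)
    (pi : nat -> A -> A) (HA : form_algebra n pi)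
    (phi : A) (Hphi : pi 1%N phi = phi) (t : R)
    (F : int -> int -> R)
    (HF : forall a b : int, a + b <= n%:Z - 1 -> F a b = F b a) :
  lie_superalgebra (hdeg n pi) (br_tphi n pi F t phi).
Proof.
have Hc := HA; case: Hc => _ _ _ hp hc.
split.
- by move=> *; apply: brDl.
- by move=> *; apply: brDr.
- move=> p q P Q hP hQ.
  case: (@homP _ _ _ _ _ _ hP) => [->|[a [Ha -> HPa]]]; first by rewrite (br0l HA); apply: hdeg0.
  case: (@homP _ _ _ _ _ _ hQ) => [->|[b [Hb -> HQb]]]; first by rewrite (br0r HA); apply: hdeg0.
  rewrite (@br_hom _ _ _ _ HA F t phi a b P Q Ha Hb HPa HQb).
  have Hw := homprod HA Hphi a b P Q; rewrite HPa HQb in Hw.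
  case: (leqP (a + 1 + b) n) => Hm.
    rewrite /hdeg ifT; last by apply/andP; split; lia.
    have -> : `|- (- a%:Z - 1 + (- b%:Z - 1)) - 1|%N = (a + 1 + b)%N by lia.
    by rewrite !(piZ HA) Hw.
  by rewrite (@vanish _ _ _ _ HA _ _ Hw Hm) !scaler0; apply: hdeg0.
- move=> p q P Q hP hQ.
  case: (@homP _ _ _ _ _ _ hP) => [->|[a [Ha -> HPa]]].
    by rewrite (br0l HA) (br0r HA) scaler0 oppr0.
  case: (@homP _ _ _ _ _ _ hQ) => [->|[b [Hb -> HQb]]].
    by rewrite (br0l HA) (br0r HA) scaler0 oppr0.
  rewrite (@br_hom _ _ _ _ HA F t phi a b P Q Ha Hb HPa HQb) (@br_hom _ _ _ _ HA F t phi b a Q P Hb Ha HQb HPa).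
  have Hw1 := homprod HA Hphi a b P Q; rewrite HPa HQb in Hw1.
  have Hw2 := homprod HA Hphi b a Q P; rewrite HPa HQb in Hw2.
  case: (leqP (a + 1 + b) n) => Hm; last first.
    rewrite (@vanish _ _ _ _ HA _ _ Hw1 Hm) (@vanish _ _ _ _ HA _ _ Hw2); last by lia.
    by rewrite !scaler0 oppr0.
  rewrite HF; last by lia.
  have key : Q * phi * P = ((-1) ^+ b * (-1) ^+ ((1 + b) * a)%N) *: (P * phi * Q).
    have E1 : Q * phi = (-1) ^+ b *: (phi * Q).
      by have := hc b 1%N Q phi; rewrite HQb Hphi muln1.
    have E2 : (phi * Q) * P = (-1) ^+ ((1 + b) * a)%N *: (P * (phi * Q)).
      have H0 : pi (1 + b)%N (phi * Q) = phi * Q.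
        by have := hp 1%N b phi Q; rewrite Hphi HQb.
      by have := hc (1 + b)%N a (phi * Q) P; rewrite H0 HPa.
    by rewrite E1 -scalerAl E2 scalerA mulrA.
  rewrite key !scalerA -scaleNr; congr (_ *: _).
  by rewrite mulrAC sign_key mulN1r opprK.
- move=> p q r P Q R' _ _ _.
  have [-> _] := dbl0 HA Hphi F t P Q R'.
  have [_ ->] := dbl0 HA Hphi F t P Q R'.
  have [-> _] := dbl0 HA Hphi F t Q P R'.
  by rewrite scaler0 addr0.
Qed.
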